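(* Let $1\le s\le d$. Natural data $\bar x$ is uniform on $\{-1,1\}^d$; an augmentation $x\sim\mathcal{A}(\bar x)$ is obtained by sampling independent $\tau_{s+1},\dots,\tau_d\sim\mathrm{Unif}[\tfrac12,1]$, multiplying coordinate $j$ of $\bar x$ by $\tau_j$ for $j=s+1,\dots,d$, and keeping the first $s$ coordinates unchanged. Let $p_{\mathrm{data}}$ be the distribution of $x\sim\mathcal{A}(\bar x)$ and $p_{\mathrm{pos}}$ the distribution of $(x,x^+)$ with $x,x^+\sim\mathcal{A}(\bar x)$ independent given a common $\bar x$. Fix $i\in[s]$ and the downstream label $y(x)=\mathrm{sgn}(x_i)$. For $\lambda>0$ let $\mathcal{L}_\lambda(f)=\mathbb{E}_{(x,x^+)\sim p_{\mathrm{pos}}}[\|f(x)-f(x^+)\|_2^2]+\lambda\|\mathbb{E}_{x\sim p_{\mathrm{data}}}[f(x)f(x)^\top]-\mathbb{I}\|_F^2$. (1) Let $k=s$ and $\mathcal{F}_{\mathrm{linear}}=\{x\mapsto Ux: U\in\mathbb{R}^{k\times d}\}$. For any $\lambda>0$ and any $\hat f\in\arg\min_{f\in\mathcal{F}_{\mathrm{linear}}}\mathcal{L}_\lambda(f)$, there exists $w\in\mathbb{R}^k$ with $\mathbb{E}_{x\sim p_{\mathrm{data}}}[(w^\top\hat f(x)-y(x))^2]=0$. (2) Let $\mathcal{F}_{\mathrm{uni}}$ be the class of all functions $\mathbb{R}^d\to\mathbb{R}^k$. If $k\le2^{d-1}$, then there exists $\hat f'\in\arg\min_{f\in\mathcal{F}_{\mathrm{uni}}}\mathcal{L}_\lambda(f)$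 such that every $w\in\mathbb{R}^k$ satisfies $\mathbb{E}_{x\sim p_{\mathrm{data}}}[(w^\top\hat f'(x)-y(x))^2]\ge1$. *)

(* Defs.v *)
From HB Require Import structures.
From mathcomp Require Import all_boot all_order all_algebra.
From mathcomp Require Import all_classical all_reals all_analysis.
Set Implicit Arguments. Unset Strict Implicit. Unset Printing Implicit Defensive.
Import Order.TTheory GRing.Theory Num.Theory.
Import numFieldNormedType.Exports.
Local Open Scope classical_set_scope.
Local Open Scope ring_scope.

Section Defs.
Variable R : realType.

Lemma half_lt1 : (2^-1 : R) < 1.
Proof. by rewrite invf_lt1// ltr1n. Qed.

Definition unif_half1 := uniform_prob half_lt1.

(* iterated integral: tau_0, ..., tau_{m-1} i.i.d. Unif[1/2,1];
   tau is a sequence (only the first m entries are used) *)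
Fixpoint iint (m : nat) (F : (nat -> R) -> \bar R) : \bar R :=
  match m with
  | 0 => F (fun _ => 0)
  | m'.+1 => (\int[unif_half1]_t
       iint m' (fun tau => F (fun j => if j is j'.+1 then tau j' else t)))%E
  end.

Definition pm (b : bool) : R := if b then 1 else -1.

(* the augmentation of xbar in {-1,1}^d with scalings tau_{s+1..d}
   (0-indexed: coordinates j >= s are multiplied by tau (j - s)) *)
Definition aug (d s : nat) (xb : {ffun 'I_d -> bool}) (tau : nat -> R) : 'cV[R]_d :=
  \col_j (if (j < s)%N then pm (xb j) else tau (j - s)%N * pm (xb j)).

Definition E_data (d s : nat) (g : 'cV[R]_d -> \bar R) : \bar R :=
  (((2 ^+ d)^-1)%:E *
   \sum_(xb : {ffun 'I_d -> bool}) iint (d - s) (fun tau => g (aug s xb tau)))%E.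

Definition E_pos (d s : nat) (h : 'cV[R]_d -> 'cV[R]_d -> \bar R) : \bar R :=
  (((2 ^+ d)^-1)%:E *
   \sum_(xb : {ffun 'I_d -> bool})
      iint ((d - s) + (d - s)) (fun tau =>
        h (aug s xb tau) (aug s xb (fun j => tau (j + (d - s))%N))))%E.

Definition sqnorm (k : nat) (v : 'cV[R]_k) : R := \sum_a v a 0 ^+ 2.

Definition loss (d s k : nat) (lam : R) (f : 'cV[R]_d -> 'cV[R]_k) : R :=
  fine (E_pos s (fun x x' => (sqnorm (f x - f x'))%:E)) +
  lam * \sum_(a < k) \sum_(b < k)
          (fine (E_data s (fun x => (f x a 0 * f x b 0)%:E)) - (a == b)%:R) ^+ 2.

Definition is_argmin (T : Type) (C : T -> Prop) (L : T -> R) (f : T) : Prop :=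
  C f /\ forall g, C g -> L f <= L g.

Definition F_linear (d k : nat) (f : 'cV[R]_d -> 'cV[R]_k) : Prop :=
  exists U : 'M[R]_(k, d), f = fun x => U *m x.

Definition borel_fun (d k : nat) (f : 'cV[R]_d -> 'cV[R]_k) : Prop :=
  forall V : set 'cV[R]_k, open V -> <<s open >> (f @^-1` V).

(* all (Borel) functions R^d -> R^k for which L_lambda is defined,
   i.e. with finite second moment under p_data *)
Definition F_uni (d s k : nat) (f : 'cV[R]_d -> 'cV[R]_k) : Prop :=
  borel_fun f /\ (E_data s (fun x => (sqnorm (f x))%:E) < +oo)%E.

Definition label (d : nat) (i : 'I_d) (x : 'cV[R]_d) : R := Num.sg (x i 0).

Definition probe_err (d s k : nat) (i : 'I_d) (f : 'cV[R]_d -> 'cV[R]_k)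
    (w : 'cV[R]_k) : \bar R :=
  E_data s (fun x => ((\sum_a w a 0 * f x a 0 - label i x) ^+ 2)%:E).

End Defs.

(* Main.v *)
Require Import Defs.
From HB Require Import structures.
From mathcomp Require Import all_boot all_order all_algebra.
From mathcomp Require Import all_classical all_reals all_analysis.
From mathcomp Require Import ring lra.
Set Implicit Arguments. Unset Strict Implicit. Unset Printing Implicit Defensive.
Import Order.TTheory GRing.Theory Num.Theory.
Import numFieldNormedType.Exports.
Local Open Scope classical_set_scope.
Local Open Scope ring_scope.
Section Gen.
Context d (T : measurableType d) (R : realType) (mu : {measure set T -> \bar R}).
Local Open Scope ereal_scope.

Lemma int_mono (f g : T -> \bar R) : (forall x, 0 <= f x) -> (forall x, f x <= g x) ->
  \int[mu]_x f x <= \int[mu]_x g x.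
Proof.
move=> f0 fg; have g0 x : 0 <= g x by apply: le_trans (fg x).
rewrite (ge0_integralTE mu f0) (ge0_integralTE mu g0) /=.
apply: ereal_sup_le => _ [h hf <-]; exists h => //= x.
exact: le_trans (hf x) (fg x).
Qed.

Import HBNNSimple.

Lemma int_negl (D : set T) (f : T -> \bar R) : measurable D -> mu (~` D) = 0 ->
  (forall x, 0 <= f x) -> \int[mu]_x f x = \int[mu]_(x in D) f x.
Proof.
move=> mD muD f0; apply/eqP; rewrite eq_le; apply/andP; split; last first.
  rewrite integral_mkcond; apply: int_mono.
    by move=> x; rewrite patchE; case: ifP.
  by move=> x; rewrite patchE; case: ifP.
rewrite (ge0_integralTE mu f0) /=.
apply: ge_ereal_sup => _ [h hf <-].
rewrite -integralT_nnsfun.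
rewrite (@ge0_negligible_integral _ _ _ mu setT (~` D)) //; last 3 first.
- exact: measurableC.
- by apply/measurable_realfun.measurable_EFinP; exact: measurable_funTS.
- by move=> x _; rewrite lee_fin.
rewrite setTD setCK integral_mkcond [leRHS]integral_mkcond; apply: int_mono.
  by move=> x; rewrite patchE; case: ifP => //; rewrite lee_fin.
by move=> x; rewrite !patchE; case: ifP.
Qed.

Lemma int_eqD (D : set T) (f g : T -> \bar R) : measurable D -> mu (~` D) = 0 ->
  (forall x, D x -> f x = g x) -> \int[mu]_x f x = \int[mu]_x g x.
Proof.
move=> mD muD fg.
rewrite integralE [in RHS]integralE.
rewrite (int_negl mD muD (f := f^\+)) // (int_negl mD muD (f := f^\-)) //.
rewrite (int_negl mD muD (f := g^\+)) // (int_negl mD muD (f := g^\-)) //.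
congr (_ - _); apply: eq_integral => x /[1!inE] Dx.
  by rewrite !funeposE fg.
by rewrite !funenegE fg.
Qed.

End Gen.

Section Iint.
Variable R : realType.
Local Open Scope ereal_scope.

Lemma unif_negl : (@unif_half1 R) (~` `[(2^-1 : R)%R, 1%R]%classic) = 0.
Proof.
rewrite /unif_half1 /uniform_prob integral_uniform_pdf.
by rewrite setICl integral_set0.
Qed.

Lemma unif_eq (f g : R -> \bar R) : (forall t, (2^-1 <= t <= 1)%R -> f t = g t) ->
  \int[@unif_half1 R]_t f t = \int[@unif_half1 R]_t g t.
Proof.
move=> fg; apply: (int_eqD _ (unif_negl)).
  exact: measurable_itv.
by move=> x /=; rewrite in_itv /=; exact: fg.
Qed.

Definition supp (m : nat) (tau : nat -> R) := forall j, (j < m)%N -> (2^-1 <= tau j <= 1)%R.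

Definition tcons (t : R) (tau : nat -> R) : nat -> R :=
  fun j => if j is j'.+1 then tau j' else t.

Lemma iintS m (F : (nat -> R) -> \bar R) : iint m.+1 F = \int[@unif_half1 R]_t iint m (fun tau => F (tcons t tau)).
Proof. by []. Qed.

Lemma supp_cons m t tau : (2^-1 <= t <= 1)%R -> supp m tau -> supp m.+1 (tcons t tau).
Proof. by move=> ht hs [|j] //= /hs. Qed.

Lemma iint_ge0 m (F : (nat -> R) -> \bar R) : (forall tau, 0 <= F tau) -> 0 <= iint m F.
Proof.
elim: m F => [|m IH] F F0 /=; first exact: F0.
by apply: integral_ge0 => t _; apply: IH.
Qed.

Lemma iint_le m (F G : (nat -> R) -> \bar R) : (forall tau, 0 <= F tau) -> (forall tau, F tau <= G tau) ->
  iint m F <= iint m G.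
Proof.
elim: m F G => [|m IH] F G F0 FG /=; first exact: FG.
apply: int_mono => t; first by apply: iint_ge0.
by apply: IH.
Qed.

Lemma iint_supp m (F G : (nat -> R) -> \bar R) : (forall tau, supp m tau -> F tau = G tau) -> iint m F = iint m G.
Proof.
elim: m F G => [|m IH] F G FG /=; first by apply: FG.
apply: unif_eq => t ht; apply: IH => tau hs; apply: FG.
exact: supp_cons.
Qed.

Lemma iint_cst m (c : \bar R) : iint m (fun _ => c) = c.
Proof.
elim: m => [|m IH] //=; rewrite IH.
rewrite integral_cst //; have h : forall x : \bar R, x = 1 -> c * x = c by move=> x ->; rewrite mule1.
apply: h; exact: probability_setT.
Qed.

Lemma iint_csupp m (F : (nat -> R) -> \bar R) (c : \bar R) : (forall tau, supp m tau -> F tau = c) -> iint m F = c.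
Proof. by move=> h; rewrite (iint_supp (G := fun _ => c)) ?iint_cst. Qed.

End Iint.

Section Box.
Variable R : realType.
Local Open Scope ereal_scope.
Local Notation U := (@unif_half1 R).

Lemma unif_fin (A : set R) : measurable A -> U A \is a fin_num.
Proof.
move=> mA; rewrite ge0_fin_numE ?measure_ge0 //.
by apply: le_lt_trans (probability_le1 U mA) _; rewrite ltry.
Qed.

Lemma iint_box m (I : nat -> set R) (eta : R) : (forall j, measurable (I j)) -> (0 <= eta)%R ->
  iint m (fun tau => (eta * \prod_(j < m) \1_(I j) (tau j))%:E) =
  (eta * \prod_(j < m) fine (U (I j)))%:E.
Proof.
elim: m I eta => [|m IH] I eta mI eta0.
  by rewrite /= !big_ord0.
rewrite iintS.
have E t : (fun tau => (eta * \prod_(j < m.+1) \1_(I j) (tcons t tau j))%:E) =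
   (fun tau => ((eta * \1_(I 0%N) t) * \prod_(j < m) \1_(I j.+1) (tau j))%:E).
  by apply: funext => tau; rewrite big_ord_recl /= mulrA.
transitivity (\int[U]_t ((eta * \prod_(j < m) fine (U (I j.+1))) * \1_(I 0%N) t)%:E).
  apply: eq_integral => t _; rewrite E (IH (fun j => I j.+1)) //; first by rewrite mulrAC.
  by apply: mulr_ge0 => //; rewrite indicE.
have := integralZl_indic (m := U) (D := setT) measurableT (fun=> I 0%N)
   (eta * \prod_(j < m) fine (U (I j.+1)))%R.
move=> ->; last 2 first.
- move=> h; exfalso; move: h; apply/negP; rewrite -leNgt.
  by apply: mulr_ge0 => //; apply: prodr_ge0 => j _; apply: fine_ge0; apply: measure_ge0.
- exact: mI.
rewrite integral_indic //; last exact: mI.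
rewrite (setIT (I 0%N)) -[X in (_ * X)%E = _]fineK; last exact: unif_fin.
rewrite -EFinM.
rewrite big_ord_recl /=; congr EFin; rewrite -mulrA; congr (_ * _)%R.
by rewrite mulrC.
Qed.

End Box.

Section Pos.
Variable R : realType.
Local Open Scope ereal_scope.
Local Notation U := (@unif_half1 R).

Lemma unif_itv (a b : R) : (2^-1 <= a)%R -> (a < b)%R -> (b <= 1)%R ->
  U `[a, b]%classic = ((1 - 2^-1)^-1 * (b - a))%:E.
Proof.
move=> ha ab hb; rewrite /unif_half1 /uniform_prob.
transitivity (\int[lebesgue_measure]_(x in `[a, b]%classic) (cst ((1 - 2^-1)^-1)%:E x)).
  apply: eq_integral => x; rewrite inE /= in_itv /= => /andP[h1 h2].
  rewrite /uniform_pdf ifT //; apply/andP; split.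
    exact: le_trans h1.
  exact: le_trans hb.
rewrite integral_cst //= lebesgue_measure_itv /= lte_fin ab -EFinD -EFinM //.
Qed.

Lemma unif_itv_gt0 (a b : R) : (2^-1 <= a)%R -> (a < b)%R -> (b <= 1)%R ->
  (0 < fine (U `[a, b]%classic))%R.
Proof.
move=> ha ab hb; rewrite unif_itv //=.
apply: mulr_gt0; last by rewrite subr_gt0.
by rewrite invr_gt0 subr_gt0 half_lt1.
Qed.

End Pos.

Section Chars.
Variables (R : realType) (d : nat).

Definition chi (S : {set 'I_d}) (xb : {ffun 'I_d -> bool}) : R := \prod_(j in S) pm R (xb j).

Definition flip (j : 'I_d) (xb : {ffun 'I_d -> bool}) : {ffun 'I_d -> bool} :=
  [ffun l => if l == j then ~~ xb l else xb l].

Lemma flipK j : involutive (flip j).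
Proof.
move=> xb; apply/ffunP => l; rewrite !ffunE.
by case: eqP => // _; rewrite negbK.
Qed.

Lemma pm_sq b : pm R b * pm R b = 1.
Proof. by case: b; rewrite /pm ?mulr1 ?mulrNN ?mulr1. Qed.

Lemma pmN b : pm R (~~ b) = - pm R b.
Proof. by case: b; rewrite /pm ?opprK. Qed.

Lemma chi_flip S j xb : chi S (flip j xb) = (if j \in S then -1 else 1) * chi S xb.
Proof.
rewrite /chi; case: (boolP (j \in S)) => jS.
  rewrite (bigD1 j jS) [in RHS](bigD1 j jS) /= ffunE eqxx pmN.
  rewrite mulN1r -mulNr; congr (_ * _); apply: eq_bigr => l /andP[_ lj].
  by rewrite ffunE (negbTE lj).
rewrite mul1r; apply: eq_bigr => l lS; rewrite ffunE.
case: eqP => // lj; by move: jS; rewrite -lj lS.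
Qed.

Lemma chi_sq S xb : chi S xb * chi S xb = 1.
Proof. by rewrite /chi -big_split /=; apply: big1 => j _; apply: pm_sq. Qed.

Lemma sum_chi2 S T : \sum_(xb : {ffun 'I_d -> bool}) chi S xb * chi T xb =
  (2 ^ d)%:R * (S == T)%:R.
Proof.
case: (eqVneq S T) => [<-|ST].
  under eq_bigr => xb _ do rewrite chi_sq.
  by rewrite sumr_const card_ffun card_bool card_ord mulr1.
rewrite mulr0.
case: (pickP (fun j => (j \in S) != (j \in T))) => [j hj | h]; last first.
  exfalso; move/eqP: ST; apply; apply/setP => j.
  by move/negbT: (h j); rewrite negbK => /eqP.
set F := fun xb => chi S xb * chi T xb.
have FN xb : F (flip j xb) = - F xb.
  rewrite /F !chi_flip; move: hj.
  case: (j \in S); case: (j \in T) => //= _; rewrite ?mul1r; 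
  by rewrite mulN1r ?mulN1r ?mulNr ?mulrN.
have E : \sum_xb F xb = \sum_xb F (flip j xb).
  exact: (reindex_inj (can_inj (flipK j))).
have : \sum_xb F xb = - \sum_xb F xb.
  by rewrite {1}E -sumrN; apply: eq_bigr => xb _; rewrite FN.
move/eqP; rewrite -addr_eq0 -mulr2n mulrn_eq0 /= => /eqP.
by [].
Qed.

Lemma chi1 j xb : chi [set j] xb = pm R (xb j).
Proof. by rewrite /chi big_set1. Qed.

Lemma sum_pm2 j l : \sum_(xb : {ffun 'I_d -> bool}) pm R (xb j) * pm R (xb l) =
  (2 ^ d)%:R * (j == l)%:R.
Proof.
under eq_bigr => xb _ do rewrite -!chi1.
rewrite sum_chi2; congr (_ * _%:R).
case: (eqVneq j l) => [->|jl]; first by rewrite eqxx.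

case: eqP => // /setP h.
have := h j; rewrite !inE eqxx => /esym/eqP jl'.
by rewrite jl' eqxx in jl.
Qed.

End Chars.

Section Egen.
Variables (R : realType) (d s : nat).
Local Open Scope ereal_scope.

Lemma E_data_csupp (g : 'cV[R]_d -> \bar R) (c : {ffun 'I_d -> bool} -> R) :
  (forall xb tau, supp (d - s) tau -> g (aug s xb tau) = (c xb)%:E) ->
  E_data s g = ((2 ^+ d)^-1 * \sum_xb c xb)%:E.
Proof.
move=> h; rewrite /E_data.
rewrite (eq_bigr (fun xb => (c xb)%:E)); last first.
  by move=> xb _; apply: iint_csupp => tau /h.
by rewrite sumEFin -EFinM.
Qed.

Definition shiftt (m : nat) (tau : nat -> R) := fun j => tau (j + m)%N.

Lemma supp_split m tau : supp (m + m) tau -> supp m tau /\ supp m (shiftt m tau).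
Proof.
move=> h; split => j jm; apply: h.
  by apply: leq_trans jm _; apply: leq_addr.
by rewrite ltn_add2r.
Qed.

Lemma E_pos_csupp (h : 'cV[R]_d -> 'cV[R]_d -> \bar R) (c : {ffun 'I_d -> bool} -> R) :
  (forall xb tau, supp (d - s) tau -> supp (d - s) (shiftt (d - s) tau) ->
     h (aug s xb tau) (aug s xb (shiftt (d - s) tau)) = (c xb)%:E) ->
  E_pos s h = ((2 ^+ d)^-1 * \sum_xb c xb)%:E.
Proof.
move=> H; rewrite /E_pos.
rewrite (eq_bigr (fun xb => (c xb)%:E)); last first.
  move=> xb _; apply: iint_csupp => tau /supp_split [h1 h2].
  exact: H.
by rewrite sumEFin -EFinM.
Qed.

Lemma E_data_ge0 (g : 'cV[R]_d -> \bar R) : (forall x, 0 <= g x) -> 0 <= E_data s g.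
Proof.
move=> g0; rewrite /E_data; apply: mule_ge0.
  by rewrite lee_fin invr_ge0 exprn_ge0.
by apply: sume_ge0 => xb _; apply: iint_ge0.
Qed.

Lemma E_pos_ge0 (h : 'cV[R]_d -> 'cV[R]_d -> \bar R) : (forall x y, 0 <= h x y) -> 0 <= E_pos s h.
Proof.
move=> h0; rewrite /E_pos; apply: mule_ge0.
  by rewrite lee_fin invr_ge0 exprn_ge0.
by apply: sume_ge0 => xb _; apply: iint_ge0.
Qed.

Lemma sqnorm_ge0 k (v : 'cV[R]_k) : (0 <= sqnorm v)%R.
Proof. by apply: sumr_ge0 => a _; apply: sqr_ge0. Qed.

Lemma loss_ge0 k (lam : R) (f : 'cV[R]_d -> 'cV[R]_k) : (0 <= lam)%R -> (0 <= loss s lam f)%R.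
Proof.
move=> l0; rewrite /loss; apply: addr_ge0.
  apply: fine_ge0; apply: E_pos_ge0 => x y; rewrite lee_fin; exact: sqnorm_ge0.
apply: mulr_ge0 => //; apply: sumr_ge0 => a _; apply: sumr_ge0 => b _.
exact: sqr_ge0.
Qed.

Lemma supp_aug_idx (tau : nat -> R) (j : 'I_d) : supp (d - s) tau -> ~~ (j < s)%N ->
  (2^-1 <= tau (j - s)%N <= 1)%R.
Proof.
move=> h js; apply: h; rewrite -leqNgt in js.
by rewrite ltn_sub2r // (leq_ltn_trans js).
Qed.

End Egen.

Section Clamp.
Variable R : realType.

Definition clampR (t : R) : R := 2^-1 * (`|t *+ 2 + 1| - `|t *+ 2 - 1|).

Lemma clamp_cont : continuous clampR.
Proof.
have -> : clampR = (fun=> 2^-1) \* ((Num.norm \o (fun t : R => t *+ 2 + 1)) -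
    (Num.norm \o (fun t : R => t *+ 2 - 1))).
  by apply: funext => t.
move=> x; apply: continuousM; first exact: cst_continuous.
apply: continuousB.
  apply: (continuous_comp (f := fun t : R => t *+ 2 + 1) (g := Num.norm)).
    apply: continuousD; last exact: cst_continuous.
    exact: natmul_continuous.
  exact: norm_continuous.
apply: (continuous_comp (f := fun t : R => t *+ 2 - 1) (g := Num.norm)).
  apply: continuousB; last exact: cst_continuous.
  exact: natmul_continuous.
exact: norm_continuous.
Qed.

Lemma clamp_pm (tau : R) b : 2^-1 <= tau <= 1 -> clampR (tau * pm R b) = pm R b.
Proof.
move=> /andP[h1 h2]; rewrite /clampR /pm.
have h2' : 1 <= tau *+ 2 by rewrite -(mulr_natr tau 2); move: h1; rewrite -(ler_pM2r (ltr0Sn _ 1%N)) mulVf //.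
case: b.
  rewrite mulr1 (ger0_norm (x := tau *+ 2 + 1)); last by lra.
  rewrite (ger0_norm (x := tau *+ 2 - 1)); last by lra.
  lra.
rewrite mulrN1 mulNrn (ler0_norm (x := - (tau *+ 2) + 1)); last by lra.
rewrite (ler0_norm (x := - (tau *+ 2) - 1)); last by lra.
lra.
Qed.

End Clamp.

Section Part2.
Variable R : realType.
Variable d : nat.

Lemma clamp_aug (s : nat) (xb : {ffun 'I_d -> bool}) (tau : nat -> R) (j : 'I_d) :
  supp (d - s) tau -> clampR (aug s xb tau j 0) = pm R (xb j).
Proof.
move=> h; rewrite /aug mxE; case: ifP => js.
  rewrite -[in LHS](mul1r (pm R (xb j))) clamp_pm //.
  by rewrite lexx andbT; exact: ltW (half_lt1 R).
exact/clamp_pm/(supp_aug_idx h (negbT js)).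
Qed.

Definition gch (S : {set 'I_d}) (x : 'cV[R]_d) : R := \prod_(j in S) clampR (x j 0).

Lemma gch_cont S : continuous (gch S).
Proof.
have H : forall r : seq 'I_d,
    continuous (fun x : 'cV[R]_d => \prod_(j <- r | j \in S) clampR (x j 0)).
  elim => [|j r IH].
    under eq_fun do rewrite big_nil; exact: cst_continuous.
  under eq_fun do rewrite big_cons.
  case: (j \in S) => //.
  move=> x.
  apply: (@continuousM _ _ (fun y : 'cV[R]_d => clampR (y j 0))
     (fun y => \prod_(j0 <- r | j0 \in S) clampR (y j0 0)) x); last exact: IH.
  exact: (@continuous_comp _ _ _ (fun y : 'cV[R]_d => y j 0) (@clampR R) x
      (@coord_continuous R _ _ j 0 x) (@clamp_cont R _)).
exact: (H (index_enum _)).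
Qed.

Lemma gch_aug S s xb tau : supp (d - s) tau -> gch S (aug s xb tau) = chi R S xb.
Proof. by move=> h; apply: eq_bigr => j _; apply: clamp_aug. Qed.

Lemma col_cont k (g : 'cV[R]_d -> 'I_k -> R) : (forall a, continuous (fun x => g x a)) ->
  continuous (fun x => \col_a g x a : 'cV[R]_k).
Proof.
move=> gc x A /nbhs_ballP [e e0 eA].
have : \forall y \near x, forall a, ball (g x a) e (g y a).
  apply: (@filter_forall _ _ (fun a y => ball (g x a) e (g y a)) (nbhs x) _) => a.
  apply: (gc a x); exact: nbhsx_ballx.
apply: filterS => y hy; apply: eA; split => // a j; rewrite !mxE; exact: hy.
Qed.

End Part2.

Section Part2main.
Variable R : realType.

Lemma pick_sets (d k : nat) (i : 'I_d) : (k <= 2 ^ (d - 1))%N ->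
  exists e : 'I_k -> {set 'I_d}, injective e /\ forall a, i \notin e a.
Proof.
move=> hk.
have cardP : #|[set S : {set 'I_d} | i \notin S]%SET| = (2 ^ (d - 1))%N.
  have -> : [set S : {set 'I_d} | i \notin S]%SET = powerset [set~ i].
    apply/setP => S; rewrite inE powersetE; apply/idP/idP.
      by move=> iS; apply/fintype.subsetP => j jS; rewrite !inE; apply: contraNneq iS => <-.
    by move/fintype.subsetP => h; apply/negP => /h; rewrite !inE eqxx.
  by rewrite card_powerset cardsC1 card_ord subn1.
have kle : (k <= #|[set S : {set 'I_d} | i \notin S]%SET|)%N by rewrite cardP.
exists (fun a => enum_val (A := [set S : {set 'I_d} | i \notin S]%SET) (widen_ord kle a)).
split.
  move=> a b /enum_val_inj /(congr1 val) /= h; exact: val_inj.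
move=> a; have := enum_valP (A := [set S : {set 'I_d} | i \notin S]%SET) (widen_ord kle a).
by rewrite inE.
Qed.

Lemma label_aug (d s : nat) (i : 'I_d) xb (tau : nat -> R) : (i < s)%N ->
  label i (aug s xb tau) = pm R (xb i).
Proof.
move=> iS; rewrite /label /aug mxE iS.
by case: (xb i); rewrite /pm ?sgr1 ?sgrN1.
Qed.

Lemma part2 (d s : nat) (i : 'I_d) : (1 <= s <= d)%N -> (i < s)%N ->
  forall (k : nat) (lam : R), 0 < lam -> (k <= 2 ^ (d - 1))%N ->
     exists fh : 'cV[R]_d -> 'cV[R]_k,
       is_argmin (@F_uni R d s k) (loss s lam) fh /\
       forall w : 'cV[R]_k, (1%:E <= probe_err s i fh w)%E.
Proof.
move=> hsd iS k lam lam0 hk.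
have [e [einj ei]] := pick_sets i hk.
pose fh := fun x : 'cV[R]_d => \col_a gch (e a) x : 'cV[R]_k.
have fhA xb tau a : supp (d - s) tau -> fh (aug s xb tau) a 0 = chi R (e a) xb.
  by move=> h; rewrite /fh mxE gch_aug.
have two0 : (2 ^+ d : R) != 0 by rewrite expf_neq0 // pnatr_eq0.
have loss0 : loss s lam fh = 0.
  rewrite /loss (@E_pos_csupp R d s _ (fun=> 0)); last first.
    move=> xb tau h1 h2; congr EFin; rewrite /sqnorm; apply: big1 => a _.
    by rewrite !mxE !gch_aug // subrr expr0n.
  rewrite big1 // mulr0 /= add0r; apply/eqP; rewrite mulf_eq0; apply/orP; right.
  apply/eqP; apply: big1 => a _; apply: big1 => b _.
  rewrite (@E_data_csupp R d s _ (fun xb => chi R (e a) xb * chi R (e b) xb)); last first.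
    by move=> xb tau h; rewrite !fhA.
  rewrite /= sum_chi2 natrX mulrA mulVf // mul1r (inj_eq einj).
  by rewrite subrr expr0n.
exists fh; split; last first.
  move=> w; rewrite /probe_err.
  rewrite (@E_data_csupp R d s _ (fun xb =>
     (\sum_a w a 0 * chi R (e a) xb - pm R (xb i)) ^+ 2)); last first.
    move=> xb tau h; congr EFin; rewrite label_aug //; congr (_ ^+ 2); congr (_ - _).
    by apply: eq_bigr => a _; rewrite fhA.
  rewrite lee_fin.
  set W := fun xb => \sum_a w a 0 * chi R (e a) xb.
  have WY : \sum_xb W xb * pm R (xb i) = 0.
    rewrite /W; under eq_bigr => xb _ do rewrite mulr_suml.
    rewrite exchange_big /=; apply: big1 => a _.
    under eq_bigr => xb _ do rewrite -chi1 -mulrA.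
    rewrite -mulr_sumr sum_chi2.
    case: eqP => [ea|]; last by rewrite mulr0 mulr0.
    by move: (ei a); rewrite ea inE eqxx.
  have YY : \sum_(xb : {ffun 'I_d -> bool}) pm R (xb i) * pm R (xb i) = (2 ^ d)%:R.
    by rewrite sum_pm2 eqxx mulr1.
  have : \sum_(xb : {ffun 'I_d -> bool}) (pm R (xb i) * pm R (xb i) - 2 * (W xb * pm R (xb i))) <=
         \sum_xb (W xb - pm R (xb i)) ^+ 2.
    apply: ler_sum => xb _; rewrite sqrrB.
    have := sqr_ge0 (W xb); rewrite expr2; lra.
  rewrite sumrB -mulr_sumr WY mulr0 subr0 YY.
  move=> h; rewrite -[X in X <= _](mulVf two0); apply: ler_wpM2l.
    by rewrite invr_ge0 exprn_ge0.
  by rewrite natrX in h.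
split.
  split.
    move=> V oV; apply: sub_sigma_algebra; apply: open_comp => // x _.
    by apply: col_cont => a; exact: gch_cont.
  rewrite (@E_data_csupp R d s _ (fun=> k%:R)); first by rewrite ltry.
  move=> xb tau h; congr EFin; rewrite /sqnorm.
  under eq_bigr => a _ do rewrite fhA // expr2 chi_sq.
  by rewrite sumr_const card_ord.
move=> g _; rewrite loss0; apply: loss_ge0; exact: ltW.
Qed.

End Part2main.

Section Part1h.
Variable R : realType.
Variables (d s : nat).

Definition TZ k (U : 'M[R]_(k, d)) := forall a (j : 'I_d), (s <= j)%N -> U a j = 0.

Lemma mulU_aug k (U : 'M[R]_(k, d)) xb tau a : TZ U ->
  (U *m aug s xb tau) a 0 = \sum_j U a j * pm R (xb j).
Proof.
move=> tz; rewrite mxE; apply: eq_bigr => j _; rewrite /aug mxE.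
case: ifP => // js; by rewrite tz ?mul0r // leqNgt js.
Qed.

Lemma Edata_quad (u v : 'I_d -> R) :
  (2 ^+ d)^-1 * \sum_(xb : {ffun 'I_d -> bool})
     ((\sum_j u j * pm R (xb j)) * (\sum_l v l * pm R (xb l))) = \sum_j u j * v j.
Proof.
have two0 : (2 ^+ d : R) != 0 by rewrite expf_neq0 // pnatr_eq0.
have E xb : (\sum_j u j * pm R (xb j)) * (\sum_l v l * pm R (xb l)) =
    \sum_j \sum_l (u j * v l) * (pm R (xb j) * pm R (xb l)).
  rewrite big_distrlr /=; apply: eq_bigr => j _; apply: eq_bigr => l _.
  by rewrite mulrACA.
under eq_bigr => xb _ do rewrite E.
rewrite exchange_big /=; under eq_bigr => j _ do rewrite exchange_big /=.
under eq_bigr => j _ do under eq_bigr => l _ do rewrite -mulr_sumr sum_pm2.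
rewrite mulr_sumr; apply: eq_bigr => j _.
rewrite (bigD1 j) //= eqxx big1 ?addr0; last first.
  by move=> l lj; rewrite eq_sym (negbTE lj) !mulr0.
by rewrite natrX mulr1 mulrCA mulVf // mulr1.
Qed.

Lemma loss_TZ k (U : 'M[R]_(k, d)) (lam : R) : TZ U ->
  loss s lam (fun x => U *m x) =
  lam * \sum_a \sum_b (\sum_j U a j * U b j - (a == b)%:R) ^+ 2.
Proof.
move=> tz; rewrite /loss (@E_pos_csupp R d s _ (fun=> 0)); last first.
  move=> xb tau _ _; congr EFin; rewrite /sqnorm big1 // => a _.
  rewrite !mxE -sumrB big1 ?expr0n // => j _; rewrite !mxE.
  case: ifP => js; first by rewrite subrr.
  by rewrite tz ?mul0r ?subrr // leqNgt js.
rewrite big1 // mulr0 /= add0r; congr (lam * _).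
apply: eq_bigr => a _; apply: eq_bigr => b _.
rewrite (@E_data_csupp R d s _ (fun xb => (\sum_j U a j * pm R (xb j)) *
   (\sum_l U b l * pm R (xb l)))) /=.
  by rewrite Edata_quad.
by move=> xb tau _; rewrite !mulU_aug.
Qed.

Definition U0 (le_sd : (s <= d)%N) : 'M[R]_(s, d) := \matrix_(a, j) ((a : nat) == j)%:R.

Lemma TZ_U0 le_sd : TZ (U0 le_sd).
Proof.
move=> a j sj; rewrite mxE; case: eqP => // h.
by move: (ltn_ord a); rewrite h ltnNge sj.
Qed.

Lemma UU0 le_sd a b : \sum_j U0 le_sd a j * U0 le_sd b j = (a == b)%:R.
Proof.
rewrite (bigD1 (widen_ord le_sd a)) //= !mxE /= eqxx mul1r big1 ?addr0.
  by rewrite eq_sym.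
move=> j ja; rewrite !mxE; case: eqP => [h|]; last by rewrite mul0r.
exfalso; move/negP: ja; apply; apply/eqP; apply: val_inj; by rewrite /= h.
Qed.

Lemma loss_U0 le_sd (lam : R) : loss s lam (fun x => U0 le_sd *m x) = 0.
Proof.
rewrite loss_TZ; last exact: TZ_U0.
rewrite big1 ?mulr0 // => a _; apply: big1 => b _.
by rewrite UU0 subrr expr0n.
Qed.

End Part1h.

Section Epos.
Variable R : realType.
Variables (d s : nat).
Local Notation m := (d - s)%N.

Lemma entry_diff k (U : 'M[R]_(k, d)) xb (tau tau' : nat -> R) a :
  (U *m aug s xb tau - U *m aug s xb tau') a 0 =
  \sum_j U a j * (if (j < s)%N then 0 else (tau (j - s)%N - tau' (j - s)%N) * pm R (xb j)).
Proof.
rewrite !mxE -sumrB; apply: eq_bigr => j _; rewrite !mxE -mulrBr.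
by case: ifP => _; [rewrite subrr | rewrite mulrBl].
Qed.

Definition Gf k (U : 'M[R]_(k, d)) xb (tau : nat -> R) : R :=
  sqnorm (U *m aug s xb tau - U *m aug s xb (shiftt m tau)).

Definition Mb k (U : 'M[R]_(k, d)) : R := \sum_a (\sum_j `|U a j|) ^+ 2.

Lemma pm_norm b : `|pm R b| = 1.
Proof. by case: b; rewrite /pm ?normrN normr1. Qed.

Lemma Gf_le k (U : 'M[R]_(k, d)) xb tau : supp (m + m) tau -> Gf U xb tau <= Mb U.
Proof.
move=> /supp_split [h1 h2]; rewrite /Gf /sqnorm /Mb; apply: ler_sum => a _.
rewrite entry_diff.
set x := \sum_j _; set b := \sum_j _.
have hx : `|x| <= b.
  apply: le_trans (ler_norm_sum _ _ _) _; apply: ler_sum => j _.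
  rewrite normrM -[leRHS]mulr1; apply: ler_wpM2l => //.
  case: ifP => js; first by rewrite normr0.
  have := supp_aug_idx h1 (negbT js); have := supp_aug_idx h2 (negbT js).
  rewrite /shiftt normrM pm_norm mulr1 => /andP[a1 a2] /andP[b1 b2].
  by rewrite ler_norml; apply/andP; split; lra.
have b0 : 0 <= b by apply: le_trans hx.
move: hx; rewrite ler_norml => /andP[l1 l2]; nra.
Qed.

Lemma Gf_ge0 k (U : 'M[R]_(k, d)) xb tau : 0 <= Gf U xb tau.
Proof. exact: sqnorm_ge0. Qed.

Lemma iint_Gf_le k (U : 'M[R]_(k, d)) xb :
  (iint (m + m) (fun tau => (Gf U xb tau)%:E) <= (Mb U)%:E)%E.
Proof.
rewrite (iint_supp (G := fun tau => (Num.min (Gf U xb tau) (Mb U))%:E)); last first.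
  by move=> tau h; rewrite min_l // Gf_le.
rewrite -[leRHS](iint_cst (m + m)); apply: iint_le => tau.
  rewrite lee_fin le_min Gf_ge0 /=.
  by apply: sumr_ge0 => a _; apply: sqr_ge0.
by rewrite lee_fin ge_min lexx orbT.
Qed.

End Epos.

Section Box2.
Variable R : realType.
Variables (d s : nat).
Local Notation m := (d - s)%N.

Definition Hi : set R := `[(3/4 : R), 1]%classic.
Definition Lo : set R := `[(2^-1 : R), 5/8]%classic.

Definition sgp k (U : 'M[R]_(k, d)) a0 (l : nat) : bool :=
  [forall j : 'I_d, ((j : nat) == (l + s)%N) ==> (0 <= U a0 j)].

Definition Ibox k (U : 'M[R]_(k, d)) a0 (l : nat) : set R :=
  if (l < m)%N then (if sgp U a0 l then Hi else Lo)
  else (if sgp U a0 (l - m) then Lo else Hi).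

Lemma sgp_val k (U : 'M[R]_(k, d)) a0 (j : 'I_d) : (s <= j)%N -> sgp U a0 (j - s) = (0 <= U a0 j).
Proof.
move=> sj; apply/forallP/idP => [h | h j'].
  by have := h j; rewrite subnK // eqxx.
apply/implyP => /eqP hj'; rewrite subnK // in hj'.
by have -> : j' = j by apply: val_inj.
Qed.

Lemma box_le k (U : 'M[R]_(k, d)) a0 (j0 : 'I_d) (tau : nat -> R) : (s <= j0)%N ->
  (`|U a0 j0| / 8) ^+ 2 * \prod_(l < m + m) \1_(Ibox U a0 l) (tau l) <=
  Gf s U [ffun=> true] tau.
Proof.
move=> sj0.
case: (boolP [forall l : 'I_(m + m), tau l \in Ibox U a0 l]) => h; last first.
  move/forallPn: h => [l hl]; rewrite (bigD1 l) //= indicE (negbTE hl) mul0r mulr0.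
  exact: Gf_ge0.
rewrite big1 ?mulr1; last by move=> l _; rewrite indicE (forallP h l).
rewrite /Gf /sqnorm (bigD1 a0) //= entry_diff.
set e := \sum_j _.
have tj (j : 'I_d) : (if (s <= j)%N then `|U a0 j| / 8 else 0) <=
    U a0 j * (if (j < s)%N then 0 else (tau (j - s)%N - shiftt m tau (j - s)%N) *
       pm R ([ffun=> true] j)).
  case: ifP => sj; last by rewrite ltnNge sj /= mulr0.
  rewrite ltnNge sj /= ffunE /pm mulr1 /shiftt.
  have lt0 : (j - s < m)%N by rewrite ltn_sub2r // (leq_ltn_trans sj).
  have lt1 : (j - s < m + m)%N by apply: leq_trans lt0 (leq_addr _ _).
  have lt2 : (j - s + m < m + m)%N by rewrite ltn_add2r.
  have hA := forallP h (Ordinal lt1); have hB := forallP h (Ordinal lt2).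
  rewrite /= /Ibox lt0 ltnNge leq_addl /= addnK sgp_val // in hA hB.
  case: (leP 0 (U a0 j)) => hU in hA hB.
    rewrite /Hi /Lo !in_setE /= !in_itv /= in hA hB.
    move/andP: hA => [a1 a2]; move/andP: hB => [b1 b2].
    rewrite ger0_norm //; nra.
  rewrite /Hi /Lo !in_setE /= !in_itv /= in hA hB.
  move/andP: hA => [a1 a2]; move/andP: hB => [b1 b2].
  rewrite ltr0_norm //; nra.
have he : `|U a0 j0| / 8 <= e.
  apply: (@le_trans _ _ (\sum_(j < d) (if (s <= j)%N then `|U a0 j| / 8 else 0))); last first.
    by apply: ler_sum => j _; exact: tj.
  rewrite (bigD1 j0) //= sj0 lerDl; apply: sumr_ge0 => j _.
  by case: ifP => //; rewrite divr_ge0.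
have h0 : 0 <= `|U a0 j0| / 8 by rewrite divr_ge0.
have rest0 : 0 <= \sum_(i < k | i != a0) ((U *m aug s [ffun=> true] tau -
     U *m aug s [ffun=> true] (shiftt m tau)) i 0) ^+ 2.
  by apply: sumr_ge0 => a _; apply: sqr_ge0.
nra.
Qed.

End Box2.

Section Epos3.
Variable R : realType.
Variables (d s : nat).
Local Notation m := (d - s)%N.
Local Open Scope ereal_scope.

Lemma Ibox_meas k (U : 'M[R]_(k, d)) a0 l : measurable (Ibox s U a0 l).
Proof. by rewrite /Ibox /Hi /Lo; repeat case: ifP => _; exact: measurable_itv. Qed.

Lemma Ibox_pos k (U : 'M[R]_(k, d)) a0 l : (0 < fine (@unif_half1 R (Ibox s U a0 l)))%R.
Proof.
have hH : (0 < fine (@unif_half1 R (@Hi R)))%R.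
  apply: unif_itv_gt0; lra.
have hL : (0 < fine (@unif_half1 R (@Lo R)))%R.
  apply: unif_itv_gt0; lra.
by rewrite /Ibox; repeat case: ifP => _.
Qed.

Lemma Epos_pos k (U : 'M[R]_(k, d)) a0 (j0 : 'I_d) : (s <= j0)%N -> (U a0 j0 != 0)%R ->
  (0 < fine (E_pos s (fun x x' => (sqnorm (U *m x - U *m x'))%:E)))%R.
Proof.
move=> sj0 hU; apply: fine_gt0; apply/andP; split.
  rewrite /E_pos; apply: mule_gt0.
    by rewrite lte_fin invr_gt0 exprn_gt0.
  rewrite (bigD1 [ffun=> true]) //=.
  apply: lt_le_trans (leeDl _ _); last first.
    by apply: sume_ge0 => xb _; apply: iint_ge0 => tau; rewrite lee_fin sqnorm_ge0.
  apply: (@lt_le_trans _ _ (iint (m + m) (fun tau =>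
     ((`|U a0 j0| / 8) ^+ 2 * \prod_(l < m + m) \1_(Ibox s U a0 l) (tau l))%:E))).
    rewrite iint_box; last 2 first.
    - by move=> l; exact: Ibox_meas.
    - by apply: sqr_ge0.
    rewrite lte_fin; apply: mulr_gt0.
      by apply: exprn_gt0; rewrite divr_gt0 // normr_gt0.
    by apply: prodr_gt0 => l _; exact: Ibox_pos.
  apply: iint_le => tau.
    rewrite lee_fin; apply: mulr_ge0; first exact: sqr_ge0.
    by apply: prodr_ge0 => l _; rewrite indicE.
  rewrite lee_fin; exact: (box_le _ _ _ sj0).
have : E_pos s (fun x x' => (sqnorm (U *m x - U *m x'))%:E) \is a fin_num.
  rewrite /E_pos; apply: fin_numM => //.
  apply/sum_fin_numP => xb _ _.
  rewrite ge0_fin_numE; last by apply: iint_ge0 => tau; rewrite lee_fin sqnorm_ge0.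
  apply: le_lt_trans (iint_Gf_le s U xb) _; exact: ltry.
by rewrite fin_numE ltey => /andP[].
Qed.

End Epos3.

Section Part1main.
Variable R : realType.

Lemma part1 (d s : nat) (i : 'I_d) : (1 <= s <= d)%N -> (i < s)%N ->
  forall (lam : R), 0 < lam ->
     forall fh : 'cV[R]_d -> 'cV[R]_s,
       is_argmin (@F_linear R d s) (loss s lam) fh ->
       exists w : 'cV[R]_s, probe_err s i fh w = 0%:E.
Proof.
move=> /andP[_ le_sd] iS lam lam0 fh [[U ->] hmin].
have hle : loss s lam (fun x => U *m x) <= 0.
  by rewrite -(loss_U0 le_sd lam); apply: hmin; exists (U0 R le_sd).
have tz : TZ s U.
  move=> a j sj; apply/eqP; apply/negPn/negP => hU.
  have := @Epos_pos R d s _ U a j sj hU.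
  move: hle; rewrite /loss /=.
  set T1 := fine _; set S := \sum_(a0 < s) _ => hle hT.
  have : 0 <= lam * S.
    apply: mulr_ge0; first exact: ltW.
    by apply: sumr_ge0 => a0 _; apply: sumr_ge0 => b _; apply: sqr_ge0.
  lra.
have S0 : \sum_a \sum_b (\sum_j U a j * U b j - (a == b)%:R) ^+ 2 = 0.
  move: hle; rewrite loss_TZ // => hle; apply/eqP; rewrite eq_le; apply/andP; split.
    by rewrite -(pmulr_rle0 _ lam0).
  by apply: sumr_ge0 => a0 _; apply: sumr_ge0 => b _; apply: sqr_ge0.
have UU a b : \sum_j U a j * U b j = (a == b)%:R.
  have h1 : \sum_b0 (\sum_j U a j * U b0 j - (a == b0)%:R) ^+ 2 = 0.
    apply: (psumr_eq0P _ S0) => // a0 _.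
    by apply: sumr_ge0 => b0 _; apply: sqr_ge0.
  have h2 : (\sum_j U a j * U b j - (a == b)%:R) ^+ 2 = 0.
    by apply: (psumr_eq0P _ h1) => // b0 _; apply: sqr_ge0.
  by move/eqP: h2; rewrite sqrf_eq0 subr_eq0 => /eqP.
have sumw (F : 'I_d -> R) : (forall j : 'I_d, (s <= j)%N -> F j = 0) ->
    \sum_(j < d) F j = \sum_(j < s) F (widen_ord le_sd j).
  move=> h; rewrite -(big_ord_narrow le_sd) [RHS]big_mkcond /=.
  by apply: eq_bigr => j _; case: ifP => // js; rewrite h // leqNgt js.
pose A : 'M[R]_s := \matrix_(a, j) U a (widen_ord le_sd j).
have AA : A *m A^T = 1%:M.
  apply/matrixP => a b; rewrite !mxE -UU.
  rewrite (sumw (fun j => U a j * U b j)); last by move=> j sj; rewrite tz // mul0r.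
  by apply: eq_bigr => j _; rewrite !mxE.
have AtA := mulmx1C AA.
pose i' : 'I_s := Ordinal iS.
have wi : widen_ord le_sd i' = i by apply: val_inj.
exists (\col_a A a i').
rewrite /probe_err (@E_data_csupp R d s _ (fun=> 0)); first by rewrite big1 // mulr0.
move=> xb tau _; congr EFin.
rewrite label_aug //.
have key : \sum_a (\col_a A a i') a 0 * (U *m aug s xb tau) a 0 = pm R (xb i).
  transitivity (\sum_a \sum_(j < s) A a i' * (A a j * pm R (xb (widen_ord le_sd j)))).
    apply: eq_bigr => a _; rewrite mulU_aug // mulr_sumr mxE.
    rewrite (sumw (fun j => A a i' * (U a j * pm R (xb j)))); last first.
      by move=> j sj; rewrite tz // mul0r mulr0.
    by apply: eq_bigr => j _; rewrite [A a j]mxE.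
  rewrite exchange_big /=.
  transitivity (\sum_(j < s) (i' == j)%:R * pm R (xb (widen_ord le_sd j))).
    apply: eq_bigr => j _.
    under eq_bigr => a _ do rewrite mulrA.
    rewrite -mulr_suml; congr (_ * _).
    have := congr1 (fun M : 'M[R]_s => M i' j) AtA.
    rewrite [in X in _ = X -> _]mxE /= => <-.
    rewrite [in RHS]mxE; apply: eq_bigr => a _.
    by rewrite [A^T i' a]mxE.
  rewrite (bigD1 i') //= eqxx mul1r big1 ?addr0; first by rewrite wi.
  by move=> j ji; rewrite eq_sym (negbTE ji) mul0r.
by rewrite key subrr expr0n.
Qed.

End Part1main.

Unset Implicit Arguments. Set Strict Implicit. Set Printing Implicit Defensive.
Local Close Scope classical_set_scope.

Theorem theorem4 (R : realType) (d s : nat) (i : 'I_d) :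
  (1 <= s <= d)%N -> (i < s)%N ->
  (forall (lam : R), 0 < lam ->
     forall fh : 'cV[R]_d -> 'cV[R]_s,
       is_argmin (@F_linear R d s) (loss s lam) fh ->
       exists w : 'cV[R]_s, probe_err s i fh w = 0%:E)
  /\
  (forall (k : nat) (lam : R), 0 < lam -> (k <= 2 ^ (d - 1))%N ->
     exists fh : 'cV[R]_d -> 'cV[R]_k,
       is_argmin (@F_uni R d s k) (loss s lam) fh /\
       forall w : 'cV[R]_k, (1%:E <= probe_err s i fh w)%E).
Proof.
move=> h1 h2; split.
  exact: (part1 h1 h2).
exact: (part2 h1 h2).
Qed.
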